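(* Let $K,L,T\ge 2$, $1\le r\le T$ and $1\le s\le\min(T,K+r)$ be integers, and let $\mathrm{DOG}_{rs}(K,L,T)$ be the integer vectors $\boldsymbol{\alpha}^{(p)}=(0,1,\dots,K-1)$, $\boldsymbol{\alpha}^{(s)}=K+\mathrm{GAP}(T,K+r,r)$, $\boldsymbol{\beta}^{(p)}=(K+r)\cdot(0,1,\dots,L-1)$, $\boldsymbol{\beta}^{(s)}=(K+r)(L-1)+K+\mathrm{GAP}(T,K+r,s)$. Then $(\boldsymbol{\alpha}^{(p)},\boldsymbol{\alpha}^{(s)},\boldsymbol{\beta}^{(p)},\boldsymbol{\beta}^{(s)})$ is a private and decodable degree table for parameters $K,L,T$ with $N=|\mathcal{TL}\cup\mathcal{TR}\cup\mathcal{BL}\cup\mathcal{BR}|$ unique entries.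
   Context: $\mathrm{GAP}(\ell,x,r)\in\mathbb{Z}^\ell$ is the vector of the first $\ell$ terms of $(0,1,\dots,r-1,\;x,\dots,x+r-1,\;2x,\dots,2x+r-1,\dots)$; adding a scalar to a vector adds it entrywise. For integer vectors $\boldsymbol{\alpha}^{(p)}\in\mathbb{Z}^K,\boldsymbol{\alpha}^{(s)}\in\mathbb{Z}^T,\boldsymbol{\beta}^{(p)}\in\mathbb{Z}^L,\boldsymbol{\beta}^{(s)}\in\mathbb{Z}^T$, with $\{\mathbf v\}$ the set of entries of $\mathbf v$ and integer sumsets $\mathcal A+\mathcal B=\{a+b\}$, let $\mathcal{TL}=\{\boldsymbol{\alpha}^{(p)}\}+\{\boldsymbol{\beta}^{(p)}\}$, $\mathcal{TR}=\{\boldsymbol{\alpha}^{(p)}\}+\{\boldsymbol{\beta}^{(s)}\}$, $\mathcal{BL}=\{\boldsymbol{\alpha}^{(s)}\}+\{\boldsymbol{\beta}^{(p)}\}$, $\mathcal{BR}=\{\boldsymbol{\alpha}^{(s)}\}+\{\boldsymbol{\beta}^{(s)}\}$. The tuple is a private and decodable degree table for $K,L,T$ with $N$ unique entries if: (I) $|\mathcal{TL}\cup\mathcal{TR}\cup\mathcal{BL}\cup\mathcal{BR}|=N$; (II) $|\mathcal{TL}|=KL$; (III) $\mathcal{TL}\cap\mathcal{TR}=\mathcal{TL}\cap\mathcal{BL}=\mathcal{TL}\cap\mathcal{BR}=\emptyset$; (IV) the concatenation $\boldsymbol{\alpha}^{(p)}\|\boldsymbol{\alpha}^{(s)}$ has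 $K+T$ distinct entries and $\boldsymbol{\beta}^{(p)}\|\boldsymbol{\beta}^{(s)}$ has $L+T$ distinct entries. *)

(* Defs.v *)
(* Integer vectors are represented as sequences of int;
   the set {v} of entries of v is the sequence v read as a set. *)
From mathcomp Require Import all_boot all_order all_algebra.
Set Implicit Arguments. Unset Strict Implicit. Unset Printing Implicit Defensive.
Import Order.TTheory GRing.Theory Num.Theory.
Local Open Scope ring_scope.

(* GAP(l, x, r): first l terms of 0,..,r-1, x,..,x+r-1, 2x,..,2x+r-1, ...
   i.e. the i-th term (i from 0) is (i div r) * x + (i mod r). *)
Definition GAP (l : nat) (x : int) (r : nat) : seq int :=
  [seq ((i %/ r)%N%:Z * x + (i %% r)%N%:Z) | i <- iota 0 l].

Definition vadd (c : int) (v : seq int) : seq int := [seq c + a | a <- v].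

Definition sumset (A B : seq int) : seq int :=
  undup [seq a + b | a <- A, b <- B].

Definition card_set (A : seq int) : nat := size (undup A).

Definition disjoint_sets (A B : seq int) : bool := ~~ has (fun a => a \in B) A.

Definition TL (ap as_ bp bs : seq int) := sumset ap bp.
Definition TR (ap as_ bp bs : seq int) := sumset ap bs.
Definition BL (ap as_ bp bs : seq int) := sumset as_ bp.
Definition BR (ap as_ bp bs : seq int) := sumset as_ bs.

Definition all_entries (ap as_ bp bs : seq int) : seq int :=
  TL ap as_ bp bs ++ TR ap as_ bp bs ++ BL ap as_ bp bs ++ BR ap as_ bp bs.

Definition private_decodable_degree_table (K L T N : nat)
    (ap as_ bp bs : seq int) : Prop :=
  [/\ [/\ size ap = K, size as_ = T, size bp = L & size bs = T],
      card_set (all_entries ap as_ bp bs) = N,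
      card_set (TL ap as_ bp bs) = (K * L)%N,
      [/\ disjoint_sets (TL ap as_ bp bs) (TR ap as_ bp bs),
                      disjoint_sets (TL ap as_ bp bs) (BL ap as_ bp bs) &
                      disjoint_sets (TL ap as_ bp bs) (BR ap as_ bp bs)] &
      uniq (ap ++ as_) /\ uniq (bp ++ bs)].

Definition DOG_ap (K : nat) : seq int := [seq i%:Z | i <- iota 0 K].
Definition DOG_as (K T r : nat) : seq int :=
  vadd K%:Z (GAP T (K + r)%N%:Z r).
Definition DOG_bp (K L r : nat) : seq int :=
  [seq (K + r)%N%:Z * i%:Z | i <- iota 0 L].
Definition DOG_bs (K L T r s : nat) : seq int :=
  vadd ((K + r)%N%:Z * (L%:Z - 1) + K%:Z) (GAP T (K + r)%N%:Z s).

(* Main.v *)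
Require Import Defs.
From mathcomp Require Import all_boot all_order all_algebra zify.
Import Order.TTheory GRing.Theory Num.Theory.
Local Open Scope ring_scope.

Lemma split_eq (d q1 q2 m1 m2 : int) : 0 <= q1 -> 0 <= q2 ->
  0 <= m1 < d -> 0 <= m2 < d -> q1*d + m1 = q2*d + m2 -> q1 = q2 /\ m1 = m2.
Proof.
move=> h1 h2 /andP[a1 b1] /andP[a2 b2] e.
have [lt|gt|eq] := ltgtP q1 q2.
- have : (q1 + 1) * d <= q2 * d by rewrite ler_pM2r; [lia|lia].
  lia.
- have : (q2 + 1) * d <= q1 * d by rewrite ler_pM2r; [lia|lia].
  lia.
- subst; lia.
Qed.

Lemma band (d t : int) : 0 < d -> - d < d * t < d -> t = 0.
Proof.
move=> hd /andP[a b].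
have [lt|gt|eq] := ltgtP t 0 => //.
- have : d * t <= d * (-1) by rewrite ler_pM2l; lia.
  lia.
- have : d * 1 <= d * t by rewrite ler_pM2l; lia.
  lia.
Qed.

Lemma memGAP l (x : int) r y : (0 < r)%N -> y \in GAP l x r ->
  exists q m : nat, (m < r)%N /\ y = q%:Z * x + m%:Z.
Proof.
move=> r0 /mapP[i _ ->]; exists (i %/ r)%N, (i %% r)%N; split=> //.
by rewrite ltn_pmod.
Qed.

Lemma mem_vadd c v y : y \in vadd c v -> exists2 z, z \in v & y = c + z.
Proof. by move=> /mapP[z h ->]; exists z. Qed.

Lemma uniq_GAP l (x : int) r : (0 < r)%N -> (r%:Z <= x) -> uniq (GAP l x r).
Proof.
move=> r0 rx; rewrite map_inj_in_uniq ?iota_uniq // => i j _ _ e.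
have := ltn_pmod i r0; have := ltn_pmod j r0 => hj hi.
rewrite (divn_eq i r) (divn_eq j r).
move: (i %/ r)%N (i %% r)%N (j %/ r)%N (j %% r)%N hi hj e => q1 m1 q2 m2 hi hj e.
have a1 : 0 <= q1%:Z by lia.
have a2 : 0 <= q2%:Z by lia.
have a3 : 0 <= m1%:Z < x by lia.
have a4 : 0 <= m2%:Z < x by lia.
have [h1 h2] := @split_eq x _ _ _ _ a1 a2 a3 a4 e.
lia.
Qed.

Lemma uniq_vadd c v : uniq v -> uniq (vadd c v).
Proof. by move=> u; rewrite map_inj_uniq // => a b; apply: addrI. Qed.

Lemma band' (d t : int) : 0 < d -> - d < d * t -> d * t < 0 -> False.
Proof.
move=> hd a b.
have [lt|gt|eq] := ltgtP t 0.
- have : d * t <= d * (-1) by rewrite ler_pM2l; lia.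
  lia.
- have : d * 0 < d * t by rewrite ltr_pM2l.
  lia.
- subst; lia.
Qed.

Lemma disj_sumset A B C D :
  (forall a b c e, a \in A -> b \in B -> c \in C -> e \in D -> a + b <> c + e) ->
  disjoint_sets (sumset A B) (sumset C D).
Proof.
move=> H; apply/hasPn => x; rewrite !mem_undup => /allpairsP[[a b] [/= ha hb ->]].
apply/negP => /allpairsP[[c e] [/= hc he]]; exact: H.
Qed.

Lemma card_sumset A B : uniq A -> uniq B ->
  (forall a b c e, a \in A -> b \in B -> c \in A -> e \in B -> a + b = c + e -> a = c /\ b = e) ->
  card_set (sumset A B) = (size A * size B)%N.
Proof.
move=> uA uB H; rewrite /card_set /sumset undup_id ?undup_uniq // undup_id ?size_allpairs //.
apply: allpairs_uniq => // -[a b] [c e] /allpairsP[[a' b'] [/= ha hb [-> ->]]]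
  /allpairsP[[c' e'] [/= hc he [-> ->]]] /= h.
by have [-> ->] := H _ _ _ _ ha hb hc he h.
Qed.

Lemma dj_le (d : int) (j L : nat) : 0 <= d -> (j < L)%N -> d * j%:Z <= d * (L%:Z - 1).
Proof. move=> hd hj; rewrite ler_wpM2l //; lia. Qed.

Theorem lemma3 (K L T r s : nat) :
  (2 <= K)%N -> (2 <= L)%N -> (2 <= T)%N ->
  (1 <= r <= T)%N -> (1 <= s <= minn T (K + r))%N ->
  private_decodable_degree_table K L T
    (card_set (all_entries (DOG_ap K) (DOG_as K T r) (DOG_bp K L r) (DOG_bs K L T r s)))
    (DOG_ap K) (DOG_as K T r) (DOG_bp K L r) (DOG_bs K L T r s).
Proof.
move=> hK hL hT /andP[r1 rT] /andP[s1 sm].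
have sKr : (s <= K + r)%N by move: sm; rewrite leq_min => /andP[].
set d := (K + r)%N%:Z.
have d0 : 0 < d by rewrite /d; lia.
have m_ap y : y \in DOG_ap K -> exists i : nat, (i < K)%N /\ y = i%:Z.
  by move=> /mapP[i]; rewrite mem_iota => /andP[_ hi] ->; exists i.
have m_as y : y \in DOG_as K T r -> exists q m : nat, (m < r)%N /\ y = K%:Z + (q%:Z * d + m%:Z).
  by move=> /mem_vadd[z /memGAP[//|q [m [hm ->]]] ->]; exists q, m.
have m_bp y : y \in DOG_bp K L r -> exists j : nat, (j < L)%N /\ y = d * j%:Z.
  by move=> /mapP[i]; rewrite mem_iota => /andP[_ hi] ->; exists i.
have m_bs y : y \in DOG_bs K L T r s -> exists q m : nat, (m < s)%N /\
    y = (d * (L%:Z - 1) + K%:Z) + (q%:Z * d + m%:Z).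
  by move=> /mem_vadd[z /memGAP[//|q [m [hm ->]]] ->]; exists q, m.
have qd0 (q : nat) : 0 <= q%:Z * d by apply: mulr_ge0; lia.
split.
- by rewrite /DOG_ap /DOG_as /DOG_bp /DOG_bs /vadd /GAP !size_map !size_iota.
- by [].
- rewrite /TL card_sumset.
  + by rewrite /DOG_ap /DOG_bp !size_map !size_iota.
  + by rewrite map_inj_uniq ?iota_uniq // => a b [].
  + rewrite map_inj_uniq ?iota_uniq // => a0 b0 /(mulfI (lt0r_neq0 d0)) h0; lia.
  + move=> a b c e /m_ap[i [hi ->]] /m_bp[j [hj ->]] /m_ap[i' [hi' ->]] /m_bp[j' [hj' ->]] h.
    have a1 : 0 <= j%:Z by lia.
    have a2 : 0 <= j'%:Z by lia.
    have a3 : 0 <= i%:Z < d by rewrite /d; lia.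
    have a4 : 0 <= i'%:Z < d by rewrite /d; lia.
    have [h1 h2] := @split_eq d _ _ _ _ a1 a2 a3 a4 ltac:(rewrite ![_ * d]mulrC; lia).
    by rewrite h1 h2.
- split; apply: disj_sumset.
  + move=> a b c e /m_ap[i [hi ->]] /m_bp[j [hj ->]] /m_ap[i' [hi' ->]] /m_bs[q [m [hm ->]]].
    have := @dj_le d j L (ltW d0) hj; have := qd0 q; lia.
  + move=> a b c e /m_ap[i [hi ->]] /m_bp[j [hj ->]] /m_as[q [m [hm ->]]] /m_bp[j' [hj' ->]] h.
    apply: (@band' d (q%:Z + j'%:Z - j%:Z) d0).
    * rewrite !mulrDr mulrN mulrC; rewrite /d in h *; lia.
    * rewrite !mulrDr mulrN mulrC; rewrite /d in h *; lia.
  + move=> a b c e /m_ap[i [hi ->]] /m_bp[j [hj ->]] /m_as[q [m [hm ->]]] /m_bs[q' [m' [hm' ->]]].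
    have := @dj_le d j L (ltW d0) hj; have := qd0 q; have := qd0 q'; lia.
- split; rewrite cat_uniq; apply/and3P; split.
  + by rewrite map_inj_uniq ?iota_uniq // => a b [].
  + apply/hasPn => y /m_as[q [m [hm ->]]]; apply/negP => /m_ap[i [hi]].
    have := qd0 q; lia.
  + apply/uniq_vadd/uniq_GAP; rewrite /d; lia.
  + rewrite map_inj_uniq ?iota_uniq // => a0 b0 /(mulfI (lt0r_neq0 d0)) h0; lia.
  + apply/hasPn => y /m_bs[q [m [hm ->]]]; apply/negP => /m_bp[j [hj]].
    have := @dj_le d j L (ltW d0) hj; have := qd0 q; lia.
  + apply/uniq_vadd/uniq_GAP; rewrite /d; lia.
Qed.
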